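(* Let $n \ge 3$, let $k,\ell \in \mathbb{N}_0$, $1 \le a_1 < \cdots < a_k < n$, $0 \le b_1 < \cdots < b_\ell < n$, and suppose the set $C=\{r^{a_1},\ldots,r^{a_k}, r^{b_1}s, \ldots, r^{b_\ell}s\}$ is closed under inversion in $\mathrm{Dih}(n)$. Let $G = \mathrm{Cay}(\mathrm{Dih}(n), C)$. For each $n$-th root of unity $\zeta$ let \[ A_\zeta = \begin{bmatrix} \sum_{j=1}^k \zeta^{a_j} & \sum_{j=1}^\ell \zeta^{-b_j} \\ \sum_{j=1}^\ell \zeta^{b_j} & \sum_{j=1}^k \zeta^{a_j}\end{bmatrix}. \] Then $G$ is a nut graph if and only if exactly one of the matrices $A_\zeta$ has $0$ as a simple eigenvalue, while all the other $A_\zeta$ are invertible.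
   Context: $\mathrm{Dih}(n) = \langle r, s \mid r^n = s^2 = e,\ srs = r^{-1}\rangle$ is the dihedral group of order $2n$. For a finite group $\Gamma$ with identity $e$ and $C \subseteq \Gamma\setminus\{e\}$ closed under inversion, $\mathrm{Cay}(\Gamma, C)$ is the graph with vertex set $\Gamma$ in which $u,v$ are adjacent iff $vu^{-1}\in C$. A nut graph is a graph with at least two vertices whose adjacency matrix has eigenvalue $0$ with multiplicity exactly one, such that the corresponding eigenvector has no zero entries. *)

(* Defs.v *)
From HB Require Import structures.
From mathcomp Require Import all_boot all_order all_algebra all_field.
Set Implicit Arguments. Unset Strict Implicit. Unset Printing Implicit Defensive.
Import Order.TTheory GRing.Theory Num.Theory.
Local Open Scope ring_scope.

(* Dihedral group Dih(n) of order 2n: the element (i, e) stands for r^i s^e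
   (e = false : r^i, e = true : r^i s), with i : 'I_n. *)
Definition Dih (n : nat) : finType := ('I_n * bool)%type.

Definition modI n (i : 'I_n) (m : nat) : 'I_n :=
  Ordinal (ltn_pmod m (leq_ltn_trans (leq0n i) (ltn_ord i))).

(* (r^i s^e)(r^j s^f) = r^(i + (-1)^e j) s^(e+f), using s r^j = r^(-j) s *)
Definition dih_mul n (x y : Dih n) : Dih n :=
  let: (i, e) := x in let: (j, f) := y in
  (modI i (i + (if e then n - j else j))%N, addb e f).

Definition dih_inv n (x : Dih n) : Dih n :=
  let: (i, e) := x in if e then (i, true) else (modI i (n - i)%N, false).

Definition Cset n (a b : seq nat) : {set Dih n} :=
  [set x : Dih n | if x.2 then (val x.1 \in b) else (val x.1 \in a)].

Definition cay_adj n (C : {set Dih n}) : rel (Dih n) :=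
  fun u v => dih_mul v (dih_inv u) \in C.

Definition adjmx (T : finType) (e : rel T) : 'M[algC]_#|T| :=
  \matrix_(i, j) (e (enum_val i) (enum_val j))%:R.

Definition nut_graph (T : finType) (e : rel T) : Prop :=
  (1 < #|T|)%N /\
  mup 0 (char_poly (adjmx e)) = 1%N /\
  exists v : 'cV[algC]_#|T|, adjmx e *m v = 0 /\ v != 0 /\ forall i, v i 0 != 0.

Definition Amat (a b : seq nat) (z : algC) : 'M[algC]_2 :=
  \matrix_(i < 2, j < 2)
    if i == j then \sum_(x <- a) z ^+ x
    else if (val i == 0)%N then \sum_(x <- b) z ^- x
    else \sum_(x <- b) z ^+ x.

(* Main.v *)
Require Import Defs.
From HB Require Import structures.
From mathcomp Require Import all_boot all_order all_algebra all_field.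
From mathcomp Require Import zify.
Set Implicit Arguments. Unset Strict Implicit. Unset Printing Implicit Defensive.
Import Order.TTheory GRing.Theory Num.Theory.
Local Open Scope ring_scope.

Lemma enum_bool_eq : enum {: bool} = [:: true; false].
Proof. by rewrite enumT unlock. Qed.

Lemma enum_pairS m : enum {: 'I_m.+1 * bool} =
  (ord0, true) :: (ord0, false) ::
  map (fun p : 'I_m * bool => (lift ord0 p.1, p.2)) (enum {: 'I_m * bool}).
Proof.
rewrite !enumT unlock /= /prod_enum enum_ordSl /=.
have -> : enum Datatypes_bool__canonical__fintype_Finite = [:: true; false].
  by rewrite enumT unlock.
rewrite /=; congr (_ :: _ :: _).
elim: (enum _) => //= x s -> //.

Qed.

Lemma card_pairS m : #|{: 'I_m.+1 * bool}| = (2 + #|{: 'I_m * bool}|)%N.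
Proof. by rewrite !cardT enum_pairS /= size_map. Qed.

Lemma ev_lo m (i : 'I_2) :
  enum_val (cast_ord (esym (card_pairS m)) (lshift _ i) : 'I_#|{: 'I_m.+1 * bool}|)
  = (ord0, i == ord0).
Proof.
rewrite (enum_val_nth (ord0, true)) enum_pairS /=.
by case: i => [[|[|//]]] Hi.
Qed.

Lemma ev_hi m (j : 'I_#|{: 'I_m * bool}|) :
  enum_val (cast_ord (esym (card_pairS m)) (rshift 2 j) : 'I_#|{: 'I_m.+1 * bool}|)
  = (lift ord0 (enum_val j).1, (enum_val j).2).
Proof.
rewrite (enum_val_nth (ord0, true)) enum_pairS /=.
rewrite add0n (nth_map (enum_val j)); last by rewrite -cardT.
by rewrite -(enum_val_nth (enum_val j)).
Qed.

Definition b2o (b : bool) : 'I_2 := if b then ord0 else ord_max.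

Lemma b2oE (i : 'I_2) : b2o (i == ord0) = i.
Proof. by apply: val_inj; case: i => [[|[|]]]. Qed.

Definition pbm (R : Type) (z : R) m (B : 'I_m -> 'M[R]_2) : 'M[R]_#|{: 'I_m * bool}| :=
  \matrix_(i, j) let x := enum_val i in let y := enum_val j in
     if x.1 == y.1 then B x.1 (b2o x.2) (b2o y.2) else z.

Lemma det_cast (R : comNzRingType) m m' (e : m = m') (A : 'M[R]_m) :
  \det (castmx (e, e) A) = \det A.
Proof. by case: m' / e; rewrite castmx_id. Qed.

Lemma det_pbm (R : comNzRingType) m (B : 'I_m -> 'M[R]_2) :
  \det (pbm 0 B) = \prod_k \det (B k).
Proof.
elim: m B => [|m IH] B.
  have e : #|{: 'I_0 * bool}| = 0%N by rewrite card_prod card_ord.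
  by rewrite -(det_cast e) det_mx00 big_ord0.
rewrite -(det_cast (card_pairS m)) big_ord_recl -(IH (fun k => B (lift ord0 k))).
rewrite -(det_ublock _ 0); congr (\det _).
have sp : forall c (i : 'I_(2 + c)), (exists i', i = lshift c i') \/ (exists i', i = rshift 2 i').
  move=> c i; case: (splitP i) => i' Ei; [left|right]; exists i'; exact: val_inj.
apply/matrixP => i j; rewrite castmxE /=.
case: (sp _ i) => [[i' ->]|[i' ->]]; case: (sp _ j) => [[j' ->]|[j' ->]].
- by rewrite block_mxEul mxE !ev_lo /= !b2oE.
- by rewrite block_mxEur mxE ev_lo ev_hi /= mxE.
- by rewrite block_mxEdl mxE ev_lo ev_hi /= ?mxE.
- by rewrite block_mxEdr !mxE !ev_hi /= (inj_eq lift_inj).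
Qed.

Lemma b2o_inj : injective b2o.
Proof. by case=> [] [] // /(congr1 val). Qed.

Lemma char_poly_pbm m (B : 'I_m -> 'M[algC]_2) :
  char_poly (pbm 0 B) = \prod_k char_poly (B k).
Proof.
rewrite /char_poly -det_pbm; congr (\det _).
apply/matrixP => i j; rewrite !mxE.
have -> : (i == j) = (enum_val i == enum_val j) by rewrite (inj_eq enum_val_inj).
case: (enum_val i) (enum_val j) => [k f] [k' f'] /=.
rewrite xpair_eqE; have [->|_] := eqVneq k k'; last by rewrite /= subr0 mulr0n.
by rewrite !mxE (inj_eq b2o_inj).
Qed.

Lemma char_poly_sim n (M D P : 'M[algC]_n) :
  P \in unitmx -> M *m P = P *m D -> char_poly M = char_poly D.
Proof.
move=> uP eMP.
have E : char_poly_mx M *m map_mx polyC P = map_mx polyC P *m char_poly_mx D.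
  rewrite /char_poly_mx mulmxBl mulmxBr mul_scalar_mx mul_mx_scalar -!map_mxM eMP.
  by [].
have nz : (\det P)%:P != 0 :> {poly algC}.
  by rewrite polyC_eq0 -unitfE -unitmxE.
have := congr1 determinant E; rewrite !det_mulmx det_map_mx mulrC.
by move/(mulfI nz).
Qed.

Lemma mup_prod (I : Type) (s : seq I) (F : I -> {poly algC}) x :
  all (fun i => F i != 0) s ->
  mup x (\prod_(i <- s) F i) = (\sum_(i <- s) mup x (F i))%N.
Proof.
elim: s => [|i s IH] /=.
  by rewrite !big_nil mupNroot // rootC oner_eq0.
case/andP => Fi Fs; rewrite !big_cons mupM // ?IH //.
by rewrite prodf_seq_neq0; apply: sub_all Fs => j.
Qed.

Lemma char_poly_neq0 n (A : 'M[algC]_n) : char_poly A != 0.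
Proof. exact: monic_neq0 (char_poly_monic A). Qed.

Lemma mup0_unit n (A : 'M[algC]_n) : (mup 0 (char_poly A) == 0%N) = (A \in unitmx).
Proof.
have rE : root (char_poly A) 0 = (\det A == 0).
  rewrite /root horner_coef0 char_poly_det mulf_eq0 expf_eq0 oppr_eq0 oner_eq0.
  by rewrite andbF.
rewrite unitmxE unitfE -rE; apply/eqP/idP => [|/negP H]; last first.
  by rewrite mupNroot //; apply/negP.
move=> H; apply/negP => R0.
have := mup_geq 0 1 (char_poly_neq0 A).
by rewrite H expr1 dvdp_XsubCl R0.
Qed.
Lemma sum_in (s : seq nat) n (F : nat -> algC) : uniq s -> all (fun y => y < n)%N s ->
  \sum_(y <- s) F y = \sum_(q < n) ((val q \in s)%:R * F q).
Proof.
move=> us als.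
rewrite -(big_mkord xpredT (fun q => (q \in s)%:R * F q)) /index_iota subn0.
rewrite [RHS](eq_bigr (fun q => if q \in s then F q else 0)); last first.
  by move=> q _; case: (q \in s) => /=; [exact: mul1r | exact: mul0r].
rewrite -(big_mkcond (fun i => i \in s)) -big_filter; apply: perm_big.
apply: uniq_perm => //; first by rewrite filter_uniq // iota_uniq.
move=> y; rewrite mem_filter mem_iota add0n andbC /=.
by case yin: (y \in s); rewrite ?andbF // (allP als).
Qed.

Lemma modS_mod n q t : (0 < n)%N -> (q < n)%N -> (((q + t) %% n + (n - t %% n)) %% n = q)%N.
Proof.
move=> n0 qn; rewrite modnDml -addnA.
rewrite {1}(divn_eq t n) -addnA subnKC; last by rewrite ltnW // ltn_pmod.
rewrite -mulSnr addnC modnMDl modn_small //.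
Qed.

Lemma sum_shift n (z : algC) (s : seq nat) t : (0 < n)%N -> z ^+ n = 1 ->
  z ^+ t * \sum_(q < n) ((((q + t) %% n)%N \in s)%:R * z ^+ q)
  = \sum_(q < n) ((val q \in s)%:R * z ^+ q).
Proof.
move=> n0 zn; rewrite big_distrr /=.
pose h (q : 'I_n) : 'I_n := Ordinal (ltn_pmod (q + t)%N n0).
have hinj : injective h.
  move=> q1 q2 /(congr1 val) /= E; apply: val_inj => /=.
  by rewrite -(modS_mod t n0 (ltn_ord q1)) E modS_mod.
rewrite [RHS](reindex_inj hinj) /=; apply: eq_bigr => q _.
by rewrite (expr_mod _ zn) exprD mulrCA [z ^+ q * _]mulrC.
Qed.

Definition pv (z : algC) n (x : Dih n) (f : bool) : algC :=
  if x.2 == f then 0 else if x.2 then z ^- x.1 else z ^+ x.1.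
Definition Pm n (w : algC) : 'M[algC]_#|Dih n| :=
  \matrix_(i, j) let x : Dih n := enum_val i in let y : Dih n := enum_val j in
     pv (w ^+ y.1) x y.2.
Definition Dm n a b (w : algC) : 'M[algC]_#|Dih n| :=
  pbm 0 (fun k : 'I_n => Amat a b (w ^+ k)).

Lemma sum_enum (T : finType) (F : T -> algC) :
  \sum_(i < #|T|) F (enum_val i) = \sum_x F x.
Proof. by rewrite [RHS](reindex (fun i : 'I_#|T| => enum_val i)) //; exists enum_rank => [i _|x _]; [exact: enum_valK|exact: enum_rankK]. Qed.

Lemma sum_pair n (F : 'I_n * bool -> algC) :
  \sum_p F p = \sum_q (F (q, true) + F (q, false)).
Proof.
rewrite [RHS](eq_bigr (fun q => \sum_g F (q, g))); last by move=> q _; rewrite big_bool.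
by rewrite pair_big; apply: eq_bigr => [[q g]].
Qed.

Lemma arA1 n p : (p < n)%N -> ((p + (n - p) %% n) %% n = 0)%N.
Proof.
move=> pn; case: p pn => [|p] pn; first by rewrite add0n subn0 modnn mod0n.
have h : (n - p.+1 < n)%N by rewrite ltn_subrL /= (leq_ltn_trans _ pn).
by rewrite (modn_small h) subnKC ?modnn // ltnW.
Qed.

Lemma arA2 n p : (p < n)%N -> ((n - (n - p) %% n) %% n = p)%N.
Proof.
move=> pn; case: p pn => [|p] pn; first by rewrite subn0 modnn subn0 modnn.
have h : (n - p.+1 < n)%N by rewrite ltn_subrL /= (leq_ltn_trans _ pn).
by rewrite (modn_small h) subKn ?modn_small // ltnW.
Qed.

Lemma zpow n (z : algC) i j : z ^+ n = 1 -> (i %% n = j %% n)%N -> z ^+ i = z ^+ j.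
Proof. by move=> zn E; rewrite -(expr_mod i zn) E expr_mod. Qed.

Lemma zneq0 n (z : algC) : (0 < n)%N -> z ^+ n = 1 -> z != 0.
Proof. by move=> n0 zn; apply/eqP => z0; move: zn; rewrite z0 expr0n eqn0Ngt n0 /= => /esym/eqP; rewrite oner_eq0. Qed.

Lemma inv_from (x y : algC) : y != 0 -> x * y = 1 -> x = y^-1.
Proof. by move=> y0 H; rewrite -(mulfK y0 x) H mul1r. Qed.

Lemma SP n (z : algC) (s : seq nat) t : (0 < n)%N -> z ^+ n = 1 -> uniq s ->
  all (fun y => y < n)%N s ->
  z ^+ t * \sum_(q < n) ((((q + t) %% n)%N \in s)%:R * z ^+ q) = \sum_(y <- s) z ^+ y.
Proof. by move=> n0 zn us als; rewrite sum_shift // (sum_in _ us als). Qed.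

Lemma SM n (z : algC) (s : seq nat) t : (0 < n)%N -> z ^+ n = 1 -> uniq s ->
  all (fun y => y < n)%N s ->
  z ^- t * \sum_(q < n) ((((q + t) %% n)%N \in s)%:R / z ^+ q) = \sum_(y <- s) z ^- y.
Proof.
move=> n0 zn us als.
have zn' : z^-1 ^+ n = 1 by rewrite exprVn zn invr1.
have E := SP t n0 zn' us als.
transitivity (z^-1 ^+ t * \sum_(q < n) ((((q + t) %% n)%N \in s)%:R * z^-1 ^+ q)).
  by rewrite exprVn; congr (_ * _); apply: eq_bigr => q _; rewrite exprVn.
by rewrite E; apply: eq_bigr => q _; rewrite exprVn.
Qed.

Lemma SYM n (z : algC) (s : seq nat) : (0 < n)%N -> z ^+ n = 1 -> uniq s ->
  all (fun y => y < n)%N s -> (forall y, y \in s -> ((n - y) %% n)%N \in s) ->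
  \sum_(y <- s) z ^- y = \sum_(y <- s) z ^+ y.
Proof.
move=> n0 zn us als cl; rewrite !(sum_in _ us als).
pose h (q : 'I_n) : 'I_n := Ordinal (ltn_pmod (n - q)%N n0).
have hh : forall q, h (h q) = q by move=> q; apply: val_inj; rewrite /= arA2.
have hinj : injective h by move=> q1 q2 /(congr1 h); rewrite !hh.
rewrite [RHS](reindex_inj hinj); apply: eq_bigr => q _ /=.
have -> : (((n - q) %% n)%N \in s) = (val q \in s).
  apply/idP/idP => [/cl|/cl //]; by rewrite arA2.
congr (_ * _); symmetry; apply: inv_from; first by rewrite expf_neq0 // (zneq0 n0 zn).
by rewrite -exprD (@zpow n _ _ 0) // modnDml subnK ?modnn ?mod0n // ltnW.
Qed.

Lemma Am00 a b (z : algC) : Amat a b z ord0 ord0 = \sum_(x <- a) z ^+ x.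
Proof. by rewrite mxE. Qed.
Lemma Am01 a b (z : algC) : Amat a b z ord0 ord_max = \sum_(x <- b) z ^- x.
Proof. by rewrite mxE. Qed.
Lemma Am10 a b (z : algC) : Amat a b z ord_max ord0 = \sum_(x <- b) z ^+ x.
Proof. by rewrite mxE. Qed.
Lemma Am11 a b (z : algC) : Amat a b z ord_max ord_max = \sum_(x <- a) z ^+ x.
Proof. by rewrite mxE. Qed.

Lemma MPe n a b (w : algC) (x y' : Dih n) : (0 < n)%N -> w ^+ n = 1 ->
  uniq a -> all (fun y => y < n)%N a -> uniq b -> all (fun y => y < n)%N b ->
  (forall y, y \in a -> ((n - y) %% n)%N \in a) ->
  \sum_(y : Dih n) (cay_adj (Cset n a b) x y)%:R * pv (w ^+ y'.1) y y'.2 =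
  \sum_(y : Dih n) pv (w ^+ y.1) x y.2 *
      (if y.1 == y'.1 then Amat a b (w ^+ y.1) (b2o y.2) (b2o y'.2) else 0).
Proof.
move=> n0 wn ua ala ub alb cla.
rewrite !sum_pair [RHS](bigD1 y'.1) //= [X in _ = _ + X]big1 ?addr0; last first.
  by move=> q /negbTE qk; rewrite qk !mulr0 addr0.
rewrite eqxx.
case: x y' => p e [k f] /=.
rewrite /cay_adj /dih_mul /dih_inv /Cset /pv /=.
have zn : (w ^+ k) ^+ n = 1 by rewrite exprAC wn expr1n.
have z0 := zneq0 n0 zn.
move: (w ^+ k) zn z0 => z zn z0.
have pn := ltn_ord p.
case: e; case: f => /=; under eq_bigr do rewrite !inE /=.
- under eq_bigr do rewrite mulr0 add0r.
  by rewrite mul0r add0r Am10 -(SP p n0 zn ub alb) mulKf // expf_neq0.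
- under eq_bigr do rewrite mulr0 addr0.
  rewrite mul0r add0r Am11 -(SYM n0 zn ua ala cla) -(SM (n - p) n0 zn ua ala).
  by rewrite mulrA -invfM -exprD subnKC ?zn ?invr1 ?mul1r // ltnW.
- under eq_bigr do rewrite mulr0 add0r.
  rewrite mul0r addr0 Am00 -(SP ((n - p) %% n) n0 zn ua ala) mulrA -exprD.
  by rewrite (@zpow n _ _ 0) ?arA1 ?mod0n // expr0 mul1r.
- under eq_bigr do rewrite mulr0 addr0.
  rewrite mul0r addr0 Am01 -(SM (n - (n - p) %% n) n0 zn ub alb).
  rewrite [z ^+ p](@zpow n _ _ (n - (n - p) %% n)) //; last by rewrite arA2 // (modn_small pn).
  by rewrite mulVKf // expf_neq0.
Qed.

Lemma MP n a b (w : algC) : (0 < n)%N -> w ^+ n = 1 ->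
  uniq a -> all (fun y => y < n)%N a -> uniq b -> all (fun y => y < n)%N b ->
  (forall y, y \in a -> ((n - y) %% n)%N \in a) ->
  adjmx (cay_adj (Cset n a b)) *m Pm n w = Pm n w *m Dm n a b w.
Proof.
move=> n0 wn ua ala ub alb cla; apply/matrixP => i j; rewrite !mxE.
have E := MPe (enum_val i) (enum_val j) n0 wn ua ala ub alb cla.
rewrite -[X in X = _]sum_enum -[X in _ = X]sum_enum in E.
under eq_bigr do rewrite !mxE.
under [RHS]eq_bigr do rewrite !mxE.
exact: E.
Qed.


Definition qv (z : algC) n (x : Dih n) (f : bool) : algC :=
  if x.2 == f then 0 else if x.2 then z ^+ x.1 else z ^- x.1.
Definition Qm n (w : algC) : 'M[algC]_#|Dih n| :=
  \matrix_(i, j) let y : Dih n := enum_val i in let x : Dih n := enum_val j in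
     n%:R^-1 * qv (w ^+ y.1) x y.2.

Lemma ORTH n (w : algC) (k k' : 'I_n) : n.-primitive_root w ->
  \sum_(q < n) (w ^+ k) ^+ q / (w ^+ k') ^+ q = (k == k')%:R * n%:R.
Proof.
move=> pw; have n0 := prim_order_gt0 pw.
have wn : w ^+ n = 1 := prim_expr_order pw.
have w0 : w != 0 by apply: (zneq0 n0 wn).
under eq_bigr do rewrite -exprVn -exprMn.
have [<-|kk] := eqVneq k k'.
  rewrite divff ?expf_neq0 //.
  by under eq_bigr do rewrite expr1n; rewrite sumr_const card_ord mul1r.
rewrite mul0r.
set v := w ^+ k / w ^+ k'.
have v1 : v - 1 != 0.
  rewrite subr_eq0 /v; apply/eqP => E.
  have : w ^+ k = w ^+ k' by rewrite -[w ^+ k](mulfVK (expf_neq0 k' w0)) E mul1r.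
  move/eqP; rewrite (eq_prim_root_expr pw) !modn_small //.
  by move=> /eqP /val_inj /eqP; rewrite (negbTE kk).
have vn : v ^+ n = 1.
  by rewrite /v exprMn exprVn -!exprM mulnC exprM wn expr1n mulnC exprM wn expr1n invr1 mulr1.
have := subrX1 v n; rewrite vn subrr => /esym /eqP; rewrite mulf_eq0 (negbTE v1) /=.
by move/eqP.
Qed.

Lemma QP n (w : algC) : n.-primitive_root w -> Qm n w *m Pm n w = 1%:M.
Proof.
move=> pw; have n0 := prim_order_gt0 pw.
have nn0 : n%:R != 0 :> algC by rewrite pnatr_eq0 -lt0n.
have E : forall y y' : Dih n, \sum_(x : Dih n) n%:R^-1 * qv (w ^+ y.1) x y.2 * pv (w ^+ y'.1) x y'.2
    = (y == y')%:R.
  case=> [k f] [k' f']; rewrite sum_pair /qv /pv /= xpair_eqE.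
  case: f; case: f' => /=.
  - under eq_bigr do rewrite !mulr0 add0r -mulrA [(_ ^+ _)^-1 * _]mulrC.
    by rewrite -big_distrr /= ORTH // andbT eq_sym mulrCA mulVf // mulr1.
  - by rewrite andbF big1 // => q _; rewrite !(mulr0, mul0r) addr0.
  - by rewrite andbF big1 // => q _; rewrite !(mulr0, mul0r) addr0.
  - under eq_bigr do rewrite !mulr0 addr0 -mulrA.
    by rewrite -big_distrr /= ORTH // andbT mulrCA mulVf // mulr1.
apply/matrixP => i j; rewrite !mxE.
have -> : (i == j) = (enum_val i == enum_val j :> Dih n) by rewrite (inj_eq enum_val_inj).
have E' := E (enum_val i) (enum_val j); rewrite -sum_enum in E'; rewrite -E'.
by apply: eq_bigr => k _; rewrite !mxE.
Qed.

Lemma tr_Amat a b (z : algC) : \tr (Amat a b z) = (\sum_(x <- a) z ^+ x) *+ 2.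
Proof. by rewrite /mxtrace !big_ord_recl big_ord0 !mxE !eqxx addr0. Qed.

Lemma mup2 (A : 'M[algC]_2) : ~~ (A \in unitmx) -> \tr A = 0 -> mup 0 (char_poly A) = 2%N.
Proof.
move=> nu t0.
have -> : char_poly A = ('X - 0%:P) ^+ 2.
  rewrite subr0; apply/polyP => i; rewrite coefXn.
  case: i => [|[|[|i]]] /=.
  - rewrite char_poly_det; move: nu; rewrite unitmxE unitfE negbK => /eqP ->.
    by rewrite mulr0.
  - by have := char_poly_trace A (erefl true); rewrite t0 oppr0.
  - have := char_poly_monic A; rewrite monicE /lead_coef size_char_poly.
    by move/eqP.
  - by rewrite nth_default // size_char_poly.
by rewrite mup_XsubCX eqxx.
Qed.

Lemma ker2 (A : 'M[algC]_2) : mup 0 (char_poly A) = 1%N -> A ord0 ord0 = A ord_max ord_max ->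
  exists c0 c1, [/\ c0 != 0, c1 != 0, A ord0 ord0 * c0 + A ord0 ord_max * c1 = 0 &
                    A ord_max ord0 * c0 + A ord_max ord_max * c1 = 0].
Proof.
move=> m1 dA.
have nu : ~~ (A \in unitmx) by rewrite -mup0_unit m1.
have L : lift ord0 ord0 = ord_max :> 'I_2 by apply: val_inj.
have : \det A^T == 0 by rewrite det_tr; move: nu; rewrite unitmxE unitfE negbK.
case/det0P => v v0 /matrixP E.
have E0 := E 0 ord0; have E1 := E 0 ord_max.
rewrite !mxE !big_ord_recl big_ord0 L !mxE addr0 in E0.
rewrite !mxE !big_ord_recl big_ord0 L !mxE addr0 in E1.
have tr0 : A ord0 ord0 = 0 -> \tr A = 0.
  by move=> h; rewrite /mxtrace !big_ord_recl big_ord0 L -dA h !addr0.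
exists (v 0 ord0), (v 0 ord_max); split.
- apply/negP => /eqP c0.
  have c1 : v 0 ord_max != 0.
    apply/negP => /eqP c1; move/negP: v0; apply; apply/eqP/rowP => j.
    rewrite mxE; case: j => [[|[|//]]] Hj.
      by rewrite -c0; congr (v 0 _); apply: val_inj.
    by rewrite -c1; congr (v 0 _); apply: val_inj.
  move: E1; rewrite c0 mul0r add0r => /eqP; rewrite mulf_eq0 (negbTE c1) /= => /eqP h.
  by have := mup2 nu (tr0 (etrans dA h)); rewrite m1.
- apply/negP => /eqP c1.
  have c0 : v 0 ord0 != 0.
    apply/negP => /eqP c0; move/negP: v0; apply; apply/eqP/rowP => j.
    rewrite mxE; case: j => [[|[|//]]] Hj.
      by rewrite -c0; congr (v 0 _); apply: val_inj.
    by rewrite -c1; congr (v 0 _); apply: val_inj.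
  move: E0; rewrite c1 mul0r addr0 => /eqP; rewrite mulf_eq0 (negbTE c0) /= => /eqP h.
  by have := mup2 nu (tr0 h); rewrite m1.
- by rewrite mulrC [_ * v 0 ord_max]mulrC.
- by rewrite mulrC [_ * v 0 ord_max]mulrC.
Qed.

Unset Implicit Arguments.

Theorem mainTheorem3 (n : nat) (a b : seq nat) :
  (3 <= n)%N ->
  sorted ltn a -> all (fun x => (1 <= x)%N && (x < n)%N) a ->
  sorted ltn b -> all (fun x => (x < n)%N) b ->
  (forall x : Dih n, x \in Cset n a b -> dih_inv x \in Cset n a b) ->
  nut_graph (cay_adj (Cset n a b)) <->
  exists2 z0 : algC, z0 ^+ n = 1 &
    mup 0 (char_poly (Amat a b z0)) = 1%N /\
    forall z : algC, z ^+ n = 1 -> z <> z0 -> Amat a b z \in unitmx.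
Proof.
move=> n3 sa ala0 sb alb hC.
have n0 : (0 < n)%N by apply: leq_trans n3.
have ua : uniq a := sorted_uniq ltn_trans ltnn sa.
have ub : uniq b := sorted_uniq ltn_trans ltnn sb.
have ala : all (fun y => y < n)%N a by apply: sub_all ala0 => x /andP[].
have cla : forall y, y \in a -> ((n - y) %% n)%N \in a.
  move=> y ya; have yn : (y < n)%N := allP ala y ya.
  by have := hC (Ordinal yn, false); rewrite !inE /=; apply.
have [w pw] := C_prim_root_exists n0.
have wn := prim_expr_order pw.
have uP : Pm n w \in unitmx := (mulmx1_unit (QP pw)).2.
have cpE : char_poly (adjmx (cay_adj (Cset n a b))) =
    \prod_(k < n) char_poly (Amat a b (w ^+ k)).
  by rewrite (char_poly_sim uP (MP n0 wn ua ala ub alb cla)) /Dm char_poly_pbm.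
pose m := fun k : 'I_n => mup 0 (char_poly (Amat a b (w ^+ k))).
have mE : mup 0 (char_poly (adjmx (cay_adj (Cset n a b)))) = (\sum_k m k)%N.
  by rewrite cpE mup_prod //; apply/allP => k _; exact: char_poly_neq0.
have unitE : forall k : 'I_n, (Amat a b (w ^+ k) \in unitmx) = (m k == 0%N).
  by move=> k; rewrite -mup0_unit.
have wk : forall z : algC, z ^+ n = 1 -> exists k : 'I_n, z = w ^+ k.
  by move=> z /(prim_rootP pw) [k ->]; exists k.
have winj : forall k k' : 'I_n, w ^+ k = w ^+ k' -> k = k'.
  move=> k k' /eqP; rewrite (eq_prim_root_expr pw) !modn_small //.
  by move/eqP/val_inj.
have wkn : forall k : nat, (w ^+ k) ^+ n = 1 by move=> k; rewrite exprAC wn expr1n.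
split.
- case=> _ [m1 _].
  rewrite mE in m1.
  have [k0 mk0] : exists k0, m k0 != 0%N.
    case: (pickP (fun k => m k != 0%N)) => [k0 h|h]; first by exists k0.
    move: m1; rewrite big1 // => k _; have := h k; by move/negbFE/eqP.
  rewrite (bigD1 k0) //= in m1.
  move: mk0 m1; set mk := m k0; set rs := (\sum_(k | k != k0) m k)%N => mk0 m1.
  have [mk1 rest] : mk = 1%N /\ rs = 0%N by lia.
  exists (w ^+ k0) => //.
  split; first exact: mk1.
  move=> z zn zne; have [k ek] := wk z zn; rewrite ek unitE.
  have kk : k != k0 by apply/eqP => e; apply: zne; rewrite ek e.
  by move/eqP: rest; rewrite sum_nat_eq0 => /forallP /(_ k); rewrite kk.
- case=> z0 z0n [m1 hu].
  have [k0 ek0] := wk z0 z0n; subst z0.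
  have mz : forall k : 'I_n, k != k0 -> m k = 0%N.
    move=> k kk; apply/eqP; rewrite -unitE; apply: hu => // /winj e.
    by rewrite e eqxx in kk.
  split; first by rewrite card_prod card_ord card_bool; lia.
  split.
    rewrite mE (bigD1 k0) //= big1 ?addn0 //.
  have [c0 [c1 [c0n c1n K0 K1]]] := ker2 m1 (etrans (Am00 _ _ _) (esym (Am11 _ _ _))).
  have z0 : w ^+ k0 != 0 by apply: (zneq0 n0 (wkn k0)).
  pose V : 'cV[algC]_#|Dih n| := \col_i (let x : Dih n := enum_val i in
        c0 * pv (w ^+ k0) x true + c1 * pv (w ^+ k0) x false).
  have Vx : forall i, V i 0 != 0.
    move=> i; rewrite mxE; case: (enum_val i : Dih n) => p e; rewrite /pv /=.
    by case: e => /=; rewrite mulr0 ?add0r ?addr0 mulf_neq0 // ?invr_eq0 expf_neq0.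
  have KV : forall x : Dih n, \sum_(y : Dih n) (cay_adj (Cset n a b) x y)%:R *
       (c0 * pv (w ^+ k0) y true + c1 * pv (w ^+ k0) y false) = 0.
    move=> x; under eq_bigr do rewrite mulrDr mulrCA [_ * (c1 * _)]mulrCA.
    rewrite big_split /= -!big_distrr /=.
    rewrite (MPe x (k0, true) n0 wn ua ala ub alb cla).
    rewrite (MPe x (k0, false) n0 wn ua ala ub alb cla) /=.
    rewrite !big_distrr -big_split /=; apply: big1 => y _.
    case: eqP => [->|_]; last by rewrite !mulr0 addr0.
    rewrite mulrCA [c1 * _]mulrCA -mulrDr.
    case: (y.2) => /=.
    + by rewrite [c0 * _]mulrC [c1 * _]mulrC K0 mulr0.
    + by rewrite [c0 * _]mulrC [c1 * _]mulrC K1 mulr0.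
  exists V; split.
    apply/matrixP => i j; rewrite !mxE.
    rewrite -[RHS](KV (enum_val i)) -[X in _ = X]sum_enum; apply: eq_bigr => k _.
    by rewrite !mxE.
  split; last by move=> i; exact: Vx.
  apply/negP => /eqP V0.
  have := Vx (enum_rank ((Ordinal n0, false) : Dih n)).
  by rewrite V0 mxE eqxx.
Qed.
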